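(* Let $M$ be a canonical dtpla and $N$ an earliest total dtop (all of whose states are reachable) such that $[\![M]\!]=[\![N]\!]$. Let $\varphi$ be the aheadness mapping from $N$ to $M$, and let $C\in\mathcal C_\Sigma$. Then (1) $N(C)\Phi=\mathrm{pref}(M,C)$, and (2) for every $v\in\mathbb N_+^*$, $q\in Q_N$ and $p\in P_M$: if $N(C)/v=\langle q,\bot\rangle$ then $\varphi(q,p)=M(C[p])/v$.
   Context: Trees and patterns. $T_\Delta(Z)$ is the set of trees over ranked alphabet $\Delta$ with extra nullary symbols $Z$; $t/v$ is the subtree at node $v\in\mathbb N_+^*$; $\bot$ is a special nullary symbol. For trees $t,t'$, $t\sqsubseteq t'$ means $t'$ is obtained from $t$ by replacing some occurrences of $\bot$ by trees; for a finite nonempty set $T$ of trees, $\sqcap T$ is the greatest lower bound w.r.t. $\sqsubseteq$ (largest common prefix, with $\bot$ at the highest nodes where the trees disagree). A $\Sigma$-context is $C\in T_\Sigma(\{\bot\})$ with exactly one occurrence of $\bot$; $\mathcal C_\Sigma$ is their set; $C[t]$ replaces $\bot$ by $t$. Dtlas. A dtla $M$ from $\Sigma$ to $\Delta$ consists of a finite set $Q_M$ of states, a total deterministic bottom-up tree automaton with finite state set $P_M$ and transitions $\delta(a,p_1,\dots,p_k)$, extended to $\delta_M:T_\Sigma\to P_M$ ($[\![p]\!]_M=\delta_M^{-1}(p)$), axioms $A_M(p)\in T_\Delta(Q_M(\{x_0\}))$, and at most one rule $q(a(x_1\langle p_1\rangle,\dots,x_k\langle p_k\rangle))\to\mathrm{rhs}_M(q,a,p_1,\dots,p_k)\in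 T_\Delta(Q_M(X_k))$ per $q,a,p_1,\dots,p_k$. Semantics: $q_M(a(s_1,\dots,s_k))=\mathrm{rhs}_M(q,a,\delta_M(s_1),\dots,\delta_M(s_k))[q'(x_i)\leftarrow q'_M(s_i)]$, $M(s)=A_M(\delta_M(s))[q(x_0)\leftarrow q_M(s)]$. Total: $[\![M]\!]$ total. A dtop is a dtla with a single look-ahead state $\bot$; write $q_N(s)$, $A_N$, $\mathrm{rhs}_N(q,a)$. A dtpla is a dtla with $|P_M|\ge2$. For $C\in\mathcal C_\Sigma$, $p\in P_M$, $M(C[p])\in T_\Delta(Q_M\times P_M)$ is the output on $C$ with the hole treated as a leaf of look-ahead state $p$ and $q_M(p)=\langle q,p\rangle$; for a dtop $N$, $N(C)=N(C[\bot])\in T_\Delta(Q_N\times\{\bot\})$. A state $q$ is reachable if $\langle q,p\rangle$ labels a node of $M(C[p])$ for some $C,p$. $M$ is la-uniform if there is $\rho_M:Q_M\to P_M$ such that the domain of $[\![q]\!]_M$ is $[\![\rho_M(q)]\!]_M$, every $q(x_0)$ in $A_M(p)$ has $\rho_M(q)=p$, every $q'(x_i)$ in $\mathrm{rhs}_M(q,a,p_1,\dots,p_k)$ has $\rho_M(q')=p_i$, and the rule for $q,a,p_1,\dots,p_k$ exists iff $\delta(a,p_1,\dots,p_k)=\rho_M(q)$. A dtla is earliest if there is no state $q$ and $d\in\Delta$ such that $q(s)$ has root label $d$ for all $s$ in the domain of $[\![q]\!]$. $M$ is canonical if it is total, la-uniform, earliest, all states reachable, and distinct states have distinct translations. $\mathrm{pref}(M,C)=\sqcap\{M(C[p])\mid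 p\in P_M\}$. For $t\in T_\Delta(Q_N\times\{\bot\})$, $t\Phi$ is $t$ with every $\langle q,\bot\rangle$ replaced by $\bot$. Aheadness mapping: the unique $\varphi:Q_N\times P_M\to T_\Delta(Q_M\times P_M)$ with $M(C[p])=N(C)[\langle q,\bot\rangle\leftarrow\varphi(q,p)\mid q\in Q_N]$ for all $C\in\mathcal C_\Sigma$, $p\in P_M$. *)

(* Defs.v *)
From Stdlib Require List.
From mathcomp Require Import all_boot.

Set Implicit Arguments.
Unset Strict Implicit.
Unset Printing Implicit Defensive.

Record ranked_alphabet := RankedAlphabet {
  ra_sort :> finType;
  rank : ra_sort -> nat
}.

(* tree D Z : trees with internal symbols from D and extra nullary
   symbols (leaves) from Z, i.e. (before the rank check) T_D(Z). *)
Inductive tree (D Z : Type) : Type :=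
| Sym  : D -> seq (tree D Z) -> tree D Z
| Leaf : Z -> tree D Z.
Arguments Sym {D Z}.
Arguments Leaf {D Z}.

Fixpoint wf (D : ranked_alphabet) (Z : Type) (t : tree D Z) : Prop :=
  match t with
  | Sym d ts => size ts = rank d /\
      (fix go (l : seq (tree D Z)) : Prop :=
         match l with nil => True | u :: l' => wf u /\ go l' end) ts
  | Leaf _ => True
  end.

Fixpoint occurs (D Z : Type) (z : Z) (t : tree D Z) : Prop :=
  match t with
  | Sym _ ts =>
      (fix go (l : seq (tree D Z)) : Prop :=
         match l with nil => False | u :: l' => occurs z u \/ go l' end) ts
  | Leaf z' => z' = z
  end.

Fixpoint subst (D Z Z' : Type) (f : Z -> tree D Z') (t : tree D Z) : tree D Z' :=
  match t with
  | Sym d ts => Sym d (map (subst f) ts)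
  | Leaf z => f z
  end.

Definition tmap (D Z Z' : Type) (f : Z -> Z') : tree D Z -> tree D Z' :=
  subst (fun z => Leaf (f z)).

Fixpoint oseq (A : Type) (l : seq (option A)) : option (seq A) :=
  match l with
  | nil => Some nil
  | o :: l' => match o, oseq l' with
               | Some a, Some l'' => Some (a :: l'')
               | _, _ => None
               end
  end.

Fixpoint osubst (D Z Z' : Type) (f : Z -> option (tree D Z')) (t : tree D Z)
  : option (tree D Z') :=
  match t with
  | Sym d ts => omap (Sym d) (oseq (map (osubst f) ts))
  | Leaf z => f z
  end.

(* t / v : subtree at node v, nodes are sequences of positive integers
   (child numbering starts at 1); None if v is not a node of t *)
Fixpoint subtree (D Z : Type) (t : tree D Z) (v : seq nat) : option (tree D Z) :=
  match v with
  | nil => Some t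
  | i :: v' =>
      match t with
      | Sym _ ts => if i == 0 then None else
          match ohead (drop i.-1 ts) with
          | Some u => subtree u v'
          | None => None
          end
      | Leaf _ => None
      end
  end.

(* Patterns: leaves None play the role of the special symbol ⊥          *)

Inductive ple (D Z : Type) : tree D (option Z) -> tree D (option Z) -> Prop :=
| ple_bot : forall t, ple (Leaf None) t
| ple_leaf : forall z, ple (Leaf (Some z)) (Leaf (Some z))
| ple_sym : forall d ts ts', List.Forall2 (@ple D Z) ts ts' -> ple (Sym d ts) (Sym d ts').

Definition is_glb (D Z : Type) (T : tree D (option Z) -> Prop) (g : tree D (option Z)) : Prop :=
  (forall t, T t -> ple g t) /\
  (forall g', (forall t, T t -> ple g' t) -> ple g' g).

(* A dtla from S to D with state set Q and look-ahead state set P.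
   - trans a [p1;..;pk] = δ(a,p1,..,pk)          (total bottom-up automaton)
   - axiom p = A_M(p), a leaf q stands for q(x0)
   - rhs q a [p1;..;pk] = Some r iff the rule
       q(a(x1<p1>,..,xk<pk>)) -> r  exists; a leaf (q',i) of r stands
     for q'(x_i) (i is 1-based). *)
Record dtla (S D : ranked_alphabet) (Q P : finType) := Dtla {
  trans : S -> seq P -> P;
  axiom : P -> tree D Q;
  rhs : Q -> S -> seq P -> option (tree D (Q * nat))
}.

Definition wf_dtla (S D : ranked_alphabet) (Q P : finType) (M : dtla S D Q P) : Prop :=
  (forall p, wf (axiom M p)) /\
  (forall q a ps r, rhs M q a ps = Some r ->
     [/\ size ps = rank a, wf r & forall q' i, occurs (q', i) r -> 0 < i <= rank a]).

Section Semantics.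
Variables (S D : ranked_alphabet) (Q P : finType) (M : dtla S D Q P).
Variables (Y : Type) (lp : Y -> P).

(* Input trees with extra leaves from Y; a leaf y is treated as a leaf
   of look-ahead state lp y, and q_M(y) = <q, lp y>. *)
Fixpoint la (s : tree S Y) : P :=
  match s with
  | Sym a ss => trans M a (map la ss)
  | Leaf y => lp y
  end.

Fixpoint sem (s : tree S Y) : Q -> option (tree D (Q * P)) :=
  match s with
  | Leaf y => fun q => Some (Leaf (q, lp y))
  | Sym a ss =>
      let fs := map sem ss in
      let ps := map la ss in
      fun q => match rhs M q a ps with
               | None => None
               | Some r => osubst (fun qi => nth (fun _ => None) fs qi.2.-1 qi.1) r
               end
  end.

Definition run (s : tree S Y) : option (tree D (Q * P)) :=
  osubst (fun q => sem s q) (axiom M (la s)).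
End Semantics.

Definition noleaf (P : Type) (v : Empty_set) : P := match v with end.

Definition itree (S : ranked_alphabet) := tree S Empty_set.

Definition delta_M S D Q P (M : dtla S D Q P) (s : itree S) : P := la M (@noleaf P) s.
Definition q_M S D Q P (M : dtla S D Q P) (q : Q) (s : itree S) := sem M (@noleaf P) s q.
Definition M_of S D Q P (M : dtla S D Q P) (s : itree S) := run M (@noleaf P) s.

Definition is_context (S : ranked_alphabet) (C : tree S unit) : Prop :=
  wf C /\ exists2 v, subtree C v = Some (Leaf tt) &
    forall v', subtree C v' = Some (Leaf tt) -> v' = v.

Definition M_ctx S D Q P (M : dtla S D Q P) (C : tree S unit) (p : P) :=
  run M (fun _ : unit => p) C.

Section Props.
Variables (S D : ranked_alphabet) (Q P : finType) (M : dtla S D Q P).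

Definition total_dtla : Prop :=
  forall s : itree S, wf s -> M_of M s <> None.

Definition la_uniform : Prop :=
  exists rho : Q -> P,
  [/\ (forall q (s : itree S), wf s -> (q_M M q s <> None <-> delta_M M s = rho q)),
      (forall p q, occurs q (axiom M p) -> rho q = p),
      (forall q a ps r q' i, rhs M q a ps = Some r -> occurs (q', i) r ->
                             rho q' = nth (rho q') ps i.-1) &
      (forall q a ps, size ps = rank a ->
                      (rhs M q a ps <> None <-> trans M a ps = rho q))].

Definition earliest : Prop :=
  ~ exists (q : Q) (d : D), forall (s : itree S) t, wf s ->
      q_M M q s = Some t -> exists ts, t = Sym d ts.

Definition reachable (q : Q) : Prop :=
  exists (C : tree S unit) (p : P) t,
    is_context C /\ M_ctx M C p = Some t /\ occurs (q, p) t.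

Definition distinct_translations : Prop :=
  forall q q' : Q, q <> q' ->
    exists s : itree S, wf s /\ q_M M q s <> q_M M q' s.

Definition canonical : Prop :=
  [/\ total_dtla, la_uniform, earliest, (forall q, reachable q) & distinct_translations].


Definition is_pref (C : tree S unit) (g : tree D (option (Q * P))) : Prop :=
  is_glb (fun t => exists p tM, M_ctx M C p = Some tM /\ t = tmap Some tM) g.
End Props.

Definition dtpla S D Q (P : finType) (M : dtla S D Q P) : Prop := 2 <= #|P|.

(* [[M]] = [[N]].  On ordinary input trees the outputs contain no
   state leaves (they lie in T_D); to compare outputs of dtlas with
   different state types we erase the (absent) leaf labels to tt. *)
Definition erase (D : Type) (Z : Type) (t : tree D Z) : tree D unit := tmap (fun _ => tt) t.
Definition same_translation S D Q P Q' P' (M : dtla S D Q P) (N : dtla S D Q' P') : Prop :=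
  forall s : itree S, wf s -> omap (@erase D _) (M_of M s) = omap (@erase D _) (M_of N s).

Definition Phi (D : ranked_alphabet) (QN Z : Type) (t : tree D (QN * unit)) : tree D (option Z) :=
  tmap (fun _ => None) t.

Definition aheadness S D QM PM QN (M : dtla S D QM PM) (N : dtla S D QN unit)
  (phi : QN -> PM -> tree D (QM * PM)) : Prop :=
  forall (C : tree S unit) (p : PM), is_context C ->
    M_ctx M C p = omap (subst (fun qb => phi qb.1 p)) (M_ctx N C tt).

(* Main.v *)
Require Import Defs.
From mathcomp Require Import all_boot.
From Stdlib Require Import FunctionalExtensionality Classical.
Set Implicit Arguments.
Unset Strict Implicit.

Definition tree_ind2 (D Z : Type) (P : tree D Z -> Prop)
  (HS : forall d ts, List.Forall P ts -> P (Sym d ts))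
  (HL : forall z, P (Leaf z)) : forall t, P t :=
  fix F t := match t with
  | Sym d ts => HS d ts ((fix G l := match l return List.Forall P l with
        | nil => @List.Forall_nil _ P
        | u :: l' => @List.Forall_cons _ P u l' (F u) (G l') end) ts)
  | Leaf z => HL z end.

Lemma Forall_map_eq (A B : Type) (f g : A -> B) (l : seq A) :
  List.Forall (fun x => f x = g x) l -> map f l = map g l.
Proof. elim=> //= x l' H _ ->; by rewrite H. Qed.

Lemma oseq_map_obind (A B : Type) (h : A -> option B) (l : seq (option A)) :
  oseq (map (fun o => obind h o) l) = obind (fun us => oseq (map h us)) (oseq l).
Proof.
elim: l => //= [[a|] l IH] //=; rewrite IH.
by case: (oseq l) => [l''|] /=; case: (h a).
Qed.

Section TreeLemmas.
Variables (D : Type).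

Lemma osubst_subst (Z1 Z2 Z3 : Type) (f : Z1 -> tree D Z2) (g : Z2 -> option (tree D Z3)) t :
  osubst g (subst f t) = osubst (fun z => osubst g (f z)) t.
Proof.
elim/tree_ind2: t => //= d ts IH.
rewrite -map_comp; congr (omap _ (oseq _)); exact: Forall_map_eq.
Qed.

Lemma osubst_assoc (Z1 Z2 Z3 : Type) (f : Z1 -> option (tree D Z2)) (g : Z2 -> option (tree D Z3)) t :
  obind (osubst g) (osubst f t) = osubst (fun z => obind (osubst g) (f z)) t.
Proof.
elim/tree_ind2: t => //= d ts IH.
have -> : map (osubst (fun z => obind (osubst g) (f z))) ts
        = map (fun o => obind (osubst g) o) (map (osubst f) ts).
  rewrite -map_comp; apply: Forall_map_eq.
  elim: IH => //= x l Hx _ H; constructor => //; by rewrite Hx.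
rewrite oseq_map_obind.
by case: (oseq (map (osubst f) ts)).
Qed.

Lemma ohead_drop_map (A B : Type) (f : A -> B) n (l : seq A) :
  ohead (drop n (map f l)) = omap f (ohead (drop n l)).
Proof. by rewrite -map_drop; case: (drop n l). Qed.

Lemma subtree_subst (Z1 Z2 : Type) (f : Z1 -> tree D Z2) v t u :
  subtree t v = Some u -> subtree (subst f t) v = Some (subst f u).
Proof.
elim: v t => [|i v IH] [d ts|z] //=; try by case=> <-.
case: eqP => // _. rewrite ohead_drop_map.
case: (ohead _) => //= u0; exact: IH.
Qed.

Lemma oseq_nth (A B : Type) (h : A -> option B) ts us n u0 :
  oseq (map h ts) = Some us -> ohead (drop n ts) = Some u0 ->
  exists u, h u0 = Some u /\ ohead (drop n us) = Some u.
Proof.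
elim: ts us n => //= x ts IH us n.
case E: (h x) => [a|] //; case E2: (oseq _) => [l|] //; case=> <-.
case: n => [|n] /=; first by case=> <-; exists a.
exact: IH.
Qed.

Lemma subtree_osubst (Z1 Z2 : Type) (f : Z1 -> option (tree D Z2)) v t t' u :
  osubst f t = Some t' -> subtree t v = Some u ->
  exists u', osubst f u = Some u' /\ subtree t' v = Some u'.
Proof.
elim: v t t' => [|i v IH] t t'.
  by move=> H [<-]; exists t'.
case: t => [d ts|z] //=.
case E: (oseq _) => [us|] //= [<-].
case: eqP => // _.
case E2: (ohead _) => [u0|] // Hs.
have [u1 [H1 H2]] := oseq_nth E E2.
rewrite /= H2; exact: IH H1 Hs.
Qed.

Lemma Forall2_map (A B C : Type) (R : B -> C -> Prop) (f : A -> B) (g : A -> C) l :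
  List.Forall (fun x => R (f x) (g x)) l -> List.Forall2 R (map f l) (map g l).
Proof. elim=> //= *; by constructor. Qed.

Lemma ple_Phi (Z1 Z2 : Type) (f : Z1 -> tree D Z2) (t : tree D Z1) :
  ple (tmap (fun _ => None) t) (tmap Some (subst f t)).
Proof.
elim/tree_ind2: t => [d ts IH|z] /=; last by constructor.
constructor; rewrite -map_comp; apply: Forall2_map.
elim: IH => //= *; by constructor.
Qed.

Inductive AL (Z : Type) (P : Z -> Prop) : tree D Z -> Prop :=
| AL_leaf z : P z -> AL P (Leaf z)
| AL_sym d ts : List.Forall (AL P) ts -> AL P (Sym d ts).

Lemma oseq_Forall (A B : Type) (h : A -> option B) (Q : B -> Prop) ts us :
  oseq (map h ts) = Some us -> List.Forall (fun x => forall y, h x = Some y -> Q y) ts ->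
  List.Forall Q us.
Proof.
elim: ts us => [|x ts IH] us /=; first by case=> <-.
case E: (h x) => [a|] //; case E2: (oseq _) => [l|] //; case=> <- H.
inversion H; constructor; [exact: H2|exact: IH].
Qed.

Lemma AL_osubst (Z1 Z2 : Type) (P : Z2 -> Prop) (f : Z1 -> option (tree D Z2)) r t :
  osubst f r = Some t -> (forall z u, f z = Some u -> AL P u) -> AL P t.
Proof.
move=> + Hf; elim/tree_ind2: r t => [d ts IH|z] t /=; last exact: Hf.
case E: (oseq _) => [us|] //= [<-]; constructor.
apply: (oseq_Forall E).
elim: IH => //= *; by constructor.
Qed.

Lemma AL_subtree (Z : Type) (P : Z -> Prop) v t u :
  AL P t -> subtree t v = Some u -> AL P u.
Proof.
elim: v t => [|i v IH] t; first by move=> H [<-].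
case: t => [d ts|z] //= H; case: eqP => // _.
case E: (ohead _) => [u0|] //; apply: IH.
inversion H; subst.
elim: ts (i.-1) H1 E {H} => [|x ts IH'] [|n] //= HF; inversion HF => //.
  by case=> <-.
exact: IH'.
Qed.

Lemma subtree_tmap (Z1 Z2 : Type) (f : Z1 -> Z2) v (t u : tree D Z1) :
  subtree t v = Some u -> subtree (tmap f t) v = Some (tmap f u).
Proof. exact: subtree_subst. Qed.

Lemma osubst_empty (Z1 Z2 : Type) (f : Z1 -> option (tree D Z2)) t :
  (Z1 -> False) -> exists t', osubst f t = Some t'.
Proof.
move=> HZ; elim/tree_ind2: t => [d ts IH|z] /=; last by case: (HZ z).
suff [us ->] : exists us, oseq (map (osubst f) ts) = Some us by exists (Sym d us).
elim: IH => /= [|x l [y ->] _ [us ->]]; first by exists nil.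
by exists (y :: us).
Qed.

End TreeLemmas.

Section Sem.
Variables (S D : ranked_alphabet) (Q P : finType) (M : dtla S D Q P).

Lemma la_subst (Y Y' : Type) (lp' : Y' -> P) (h : Y -> tree S Y') C :
  la M lp' (subst h C) = la M (fun y => la M lp' (h y)) C.
Proof.
elim/tree_ind2: C => [a Cs IH|y] //=.
rewrite -map_comp; congr (trans M a _); exact: Forall_map_eq.
Qed.

Lemma sem_subst (Y' : Type) (lp' : Y' -> P) (s : tree S Y') (C : tree S unit) q :
  sem M lp' (subst (fun _ : unit => s) C) q =
  obind (osubst (fun qp : Q * P => sem M lp' s qp.1))
        (sem M (fun _ : unit => la M lp' s) C q).
Proof.
elim/tree_ind2: C q => [a Cs IH|[]] q //=.
have -> : map (la M lp') (map (subst (fun _ : unit => s)) Cs)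
          = map (la M (fun _ : unit => la M lp' s)) Cs.
  rewrite -map_comp; apply: Forall_map_eq; elim: Cs {IH} => //= *; constructor => //.
  exact: la_subst.
case: (rhs M q a _) => [r|] //=.
rewrite osubst_assoc; congr osubst; apply: functional_extensionality => qi.
move: (qi.2.-1) (qi.1) => n q'.
elim: IH n => [|x l Hx _ IH'] [|n] //=.
Qed.

Lemma run_subst (Y' : Type) (lp' : Y' -> P) (s : tree S Y') (C : tree S unit) :
  run M lp' (subst (fun _ : unit => s) C) =
  obind (osubst (fun qp : Q * P => sem M lp' s qp.1))
        (run M (fun _ : unit => la M lp' s) C).
Proof.
rewrite /run osubst_assoc la_subst; congr osubst.
apply: functional_extensionality => q; exact: sem_subst.
Qed.

Lemma sem_leaves (p : P) (C : tree S unit) q t :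
  sem M (fun _ : unit => p) C q = Some t -> AL (fun z : Q * P => z.2 = p) t.
Proof.
elim/tree_ind2: C q t => [a Cs IH|[]] q t /=; last by case=> <-; constructor.
case: (rhs M q a _) => [r|] // H.
apply: (AL_osubst H) => qi u.
move: (qi.2.-1) (qi.1) => n q'.
elim: IH n => [|x l Hx _ IH'] [|n] //=; [exact: Hx|exact: IH'].
Qed.

Lemma run_leaves (p : P) (C : tree S unit) t :
  run M (fun _ : unit => p) C = Some t -> AL (fun z : Q * P => z.2 = p) t.
Proof. move=> H; apply: (AL_osubst H) => q u; exact: sem_leaves. Qed.

End Sem.

Lemma wf_SymE (D : ranked_alphabet) (Z : Type) d (ts : seq (tree D Z)) :
  wf (Sym d ts) <-> size ts = rank d /\ List.Forall (@wf D Z) ts.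
Proof.
rewrite /=; split; case=> Hs H; split=> //; clear Hs; elim: ts H => [|x l IH] /=.
- by constructor.
- by case=> Hx Hl; constructor; auto.
- by move=> *.
- move=> H; inversion H; split=> //; exact: IH.
Qed.

Lemma wf_subst (D : ranked_alphabet) (Z Z' : Type) (h : Z -> tree D Z') (C : tree D Z) :
  (forall z, wf (h z)) -> wf C -> wf (subst h C).
Proof.
move=> Hh; elim/tree_ind2: C => [d ts IH|z] //= /wf_SymE [Hs HF].
apply/wf_SymE; rewrite size_map; split=> //.
elim: IH HF => //= x l Hx _ IH' H; inversion H; constructor; auto.
Qed.

Lemma unit_tt (u : unit) : u = tt. Proof. by case: u. Qed.

Lemma Forall_ohead (A : Type) (Pr : A -> Prop) (l : seq A) :
  (forall n u, ohead (drop n l) = Some u -> Pr u) -> List.Forall Pr l.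
Proof.
elim: l => [|x l IH] H; constructor; first exact: (H 0).
apply: IH => n u; exact: (H n.+1).
Qed.

Lemma subtree_child (D Z : Type) (t : tree D Z) v d ts n u :
  subtree t v = Some (Sym d ts) -> ohead (drop n ts) = Some u ->
  subtree t (rcons v n.+1) = Some u.
Proof.
elim: v t => [|i v IH] t /=.
  by case=> -> /= ->.
case: t => [d0 ts0|z] //; case: eqP => // _.
case: (ohead _) => [u0|] // H1 H2; exact: IH H1 H2.
Qed.

Lemma F2lemma (Pp T A B Cc : Type) (p0 : Pp) (R : A -> B -> Prop) (R' : A -> Cc -> Prop)
  (F : Pp -> T -> B) (G : T -> Cc) gs ts :
  (forall p, List.Forall2 R gs (map (F p) ts)) ->
  List.Forall (fun u => forall g, (forall p, R g (F p u)) -> R' g (G u)) ts ->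
  List.Forall2 R' gs (map G ts).
Proof.
move=> H HF; elim: HF gs H => [|u l Hu _ IH] gs H /=.
  by have := H p0 => H0; inversion H0; constructor.
have := H p0 => H0; inversion H0; subst.
constructor.
- apply: Hu => p; have := H p => Hp; by inversion Hp.
- apply: IH => p; have := H p => Hp; by inversion Hp.
Qed.

Lemma ple_sym_inv (D Z : Type) d d' (ts ts' : seq (tree D (option Z))) :
  ple (Sym d ts) (Sym d' ts') -> d = d' /\ List.Forall2 (@ple D Z) ts ts'.
Proof. move=> H; inversion H; by subst. Qed.

Theorem mainTheorem4
  (S D : ranked_alphabet) (QM PM QN : finType)
  (M : dtla S D QM PM) (N : dtla S D QN unit)
  (wfM : wf_dtla M) (wfN : wf_dtla N)
  (canM : canonical M) (tplaM : dtpla M)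
  (earlyN : earliest N) (totN : total_dtla N) (reachN : forall q, reachable N q)
  (eqMN : same_translation M N)
  (phi : QN -> PM -> tree D (QM * PM)) (hphi : aheadness M N phi)
  (C : tree S unit) (hC : is_context C) :
  exists tN : tree D (QN * unit),
    M_ctx N C tt = Some tN /\
    (* (1)  N(C)Φ = pref(M,C) *)
    is_pref M C (Phi (QM * PM) tN) /\
    (* (2)  N(C)/v = <q,⊥>  implies  φ(q,p) = M(C[p])/v *)
    (forall (v : seq nat) (q : QN) (p : PM),
        subtree tN v = Some (Leaf (q, tt)) ->
        exists tM, M_ctx M C p = Some tM /\ subtree tM v = Some (phi q p)).
Proof.
have [p1 [p2 [_ _ np12]]] : exists x y : PM, [/\ x \in PM, y \in PM & x != y].
  by apply/card_gt1P; exact: tplaM.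
have wC : wf C by case: hC.
have [tN HN] : exists tN, M_ctx N C tt = Some tN.
  case: (classic (exists s : itree S, wf s)) => [[s ws]|nos].
  - have wCs : wf (subst (fun _ : unit => s) C) by apply: wf_subst.
    have := totN _ wCs; rewrite /M_of run_subst (unit_tt (la N _ s)).
    rewrite /M_ctx; case: (run N (fun _ : unit => tt) C) => //= t _; by exists t.
  - have HQ : QN -> False.
      move=> q; case: (pickP (@predT D)) => [d _|noD].
      + apply: earlyN; exists q, d => s t ws; exfalso; apply: nos; by exists s.
      + case: canM => _ [rho [_ Hax _ _]] _ _ Hdist.
        have leafax : forall p, exists q', axiom M p = Leaf q' /\ rho q' = p.
          move=> p; case E: (axiom M p) => [d l|q']; first by have := noD d.
          exists q'; split=> //; apply: Hax; by rewrite E.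
        have [q1 [_ r1]] := leafax p1; have [q2 [_ r2]] := leafax p2.
        have : q1 <> q2 by move=> e; move: np12; rewrite -r1 -r2 e eqxx.
        move/Hdist => [s [ws _]]; apply: nos; by exists s.
    exact: osubst_empty.
have hM : forall p, M_ctx M C p = Some (subst (fun qb => phi qb.1 p) tN).
  by move=> p; rewrite hphi // HN.
exists tN; split=> //; split; last first.
  move=> v q p Hv; exists (subst (fun qb => phi qb.1 p) tN); split=> //.
  exact: (subtree_subst _ Hv).
split.
  move=> t [p [tM [H ->]]]; move: H; rewrite hM => -[<-]; exact: ple_Phi.
move=> g' HgT.
have Hg' : forall p, ple g' (tmap Some (subst (fun qb => phi qb.1 p) tN)).
  by move=> p; apply: HgT; exists p, (subst (fun qb => phi qb.1 p) tN); split.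
suff Key : forall t, (exists v, subtree tN v = Some t) -> forall g,
    (forall p, ple g (tmap Some (subst (fun qb => phi qb.1 p) t))) -> ple g (Phi (QM * PM) t).
  by apply: Key => //; exists nil.
elim/tree_ind2 => [d ts IH|[q []]] [v Hv] g Hg0.
- case: g Hg0 => [d' gs|[z|]] Hg; last by constructor.
    2: by have := Hg p1 => H; inversion H.
  have Hd : d' = d by have := Hg p1 => H; inversion H.
  subst d'; constructor.
  apply: (F2lemma p1 (F := fun p u => tmap Some (subst (fun qb => phi qb.1 p) u))).
    move=> p; have := Hg p; rewrite /= => H; have [_ HF] := ple_sym_inv H.
    rewrite -map_comp in HF; exact HF.
  have Hch : List.Forall (fun u => exists v', subtree tN v' = Some u) ts.
    apply: Forall_ohead => n u Hn; exists (rcons v n.+1); exact: subtree_child Hv Hn.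
  elim: IH Hch => [|x l Hx _ IH'] H; constructor; inversion H; subst.
    exact: Hx.
  exact: IH'.
- case: g Hg0 => [d gs|[z|]] Hg; last by constructor.
  + have E : forall p, exists ks, phi q p = Sym d ks.
      move=> p; have := Hg p; rewrite /=; case: (phi q p) => [d0 ks|w] /= H; inversion H.
      by exists ks.
    exfalso; apply: earlyN; exists q, d => s t ws Hs.
    have wCs : wf (subst (fun _ : unit => s) C) by apply: wf_subst.
    have EN : M_of N (subst (fun _ : unit => s) C)
              = osubst (fun qp => sem N (@noleaf unit) s qp.1) tN.
      rewrite /M_of run_subst (unit_tt (la N _ s)).
      change (run N (fun _ => tt) C) with (M_ctx N C tt); by rewrite HN.
    have EM : M_of M (subst (fun _ : unit => s) C)
              = osubst (fun qp => sem M (@noleaf PM) s qp.1)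
                       (subst (fun qb => phi qb.1 (delta_M M s)) tN).
      rewrite /M_of run_subst.
      change (run M (fun _ => la M (@noleaf PM) s) C) with (M_ctx M C (delta_M M s)).
      by rewrite hM.
    case EN' : (M_of N (subst (fun _ : unit => s) C)) => [tN'|]; last by have := totN _ wCs; rewrite EN'.
    have := eqMN _ wCs; rewrite EN'; case EM' : (M_of M (subst (fun _ : unit => s) C)) => [tM'|] //= [Eer].
    rewrite EN in EN'; rewrite EM in EM'.
    have [u [Hu1 Hu2]] := subtree_osubst EN' Hv.
    move: Hu1 => /= Hu1; rewrite /q_M Hu1 in Hs; case: Hs => Hs; subst u.
    have [ks Eks] := E (delta_M M s).
    have [u' [Hu1' Hu2']] := subtree_osubst EM' (subtree_subst _ Hv).
    move: Hu1'; rewrite /= Eks /=; case: (oseq _) => [us|] //= [Eu']; subst u'.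
    have := subtree_tmap (fun _ => tt) Hu2; have := subtree_tmap (fun _ => tt) Hu2'.
    rewrite /erase in Eer; rewrite Eer => -> [].
    case: t {Hu2 Hu1} => [d0 ts0|w] //= [-> _]; by exists ts0.
  + have E : forall p, phi q p = Leaf z.
      move=> p; have := Hg p; rewrite /=; case: (phi q p) => [d0 ks|w] /= H; inversion H.
      by [].
    have L : forall p, z.2 = p.
      move=> p; have := run_leaves (hM p) => HA.
      have := AL_subtree HA (subtree_subst _ Hv); rewrite /= E => H; by inversion H.
    by move: np12; rewrite -(L p1) -(L p2) eqxx.
Qed.
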